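(* Let $K\subseteq\mathbb{R}^d$ be a convex body and let $r\ge 0$. Let $E$ be a John ellipsoid of $K$, with center $c$, and let $H$ be a hyperplane passing through $c$, which divides $K$ into the two pieces $K^+=K\cap H^+$ and $K^-=K\cap H^-$, where $H^+$ and $H^-$ are the two closed half-spaces bounded by $H$. Then $$\mathsf{Vol}(K^+ + r\mathsf{B})\le\Big(1-\frac{1}{10d^d}\Big)\Big(\mathsf{Vol}(K^+ + r\mathsf{B})+\mathsf{Vol}(K^- + r\mathsf{B})\Big).$$
   Context: A convex body is a compact convex subset of $\mathbb{R}^d$ with nonempty interior. $\mathsf{B}$ is the closed unit Euclidean ball in $\mathbb{R}^d$, $+$ denotes Minkowski sum $X+Y=\{x+y:x\in X,y\in Y\}$, and $\mathsf{Vol}$ is Lebesgue measure. A John ellipsoid of $K$ is a set $E=A^{-1}(q+\mathsf{B})$, where $q\in\mathbb{R}^d$ and $A$ is an invertible linear map such that $q+\mathsf{B}\subseteq A(K)\subseteq q+d\mathsf{B}$ (such $q$ and $A$ always exist); its center is $A^{-1}q$. *)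

(* Defs.v *)
From HB Require Import structures.
From mathcomp Require Import all_boot all_order all_algebra.
From mathcomp Require Import all_classical all_reals all_analysis.
Set Implicit Arguments. Unset Strict Implicit. Unset Printing Implicit Defensive.
Import Order.TTheory GRing.Theory Num.Theory.
Import numFieldNormedType.Exports.
Local Open Scope classical_set_scope.
Local Open Scope ring_scope.

(* Points of R^d are row vectors 'rV[R]_d (with the product topology,
   which is the Euclidean topology). Linear maps act by x |-> x *m A. *)

Definition jl_dotv (R : realType) (d : nat) (x y : 'rV[R]_d) : R :=
  \sum_(i < d) x 0 i * y 0 i.

Definition jl_unit_ball (R : realType) (d : nat) : set 'rV[R]_d :=
  [set x | jl_dotv x x <= 1].

Definition jl_msum (R : realType) (d : nat) (X Y : set 'rV[R]_d) : set 'rV[R]_d :=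
  [set z | exists2 x, X x & exists2 y, Y y & z = x + y].

Definition jl_sdil (R : realType) (d : nat) (t : R) (X : set 'rV[R]_d) : set 'rV[R]_d :=
  [set t *: x | x in X].

Definition jl_stransl (R : realType) (d : nat) (q : 'rV[R]_d) (X : set 'rV[R]_d) :
  set 'rV[R]_d := [set q + x | x in X].

Definition jl_convex_set (R : realType) (d : nat) (K : set 'rV[R]_d) : Prop :=
  forall x y (t : R), K x -> K y -> 0 <= t <= 1 -> K ((1 - t) *: x + t *: y).

Definition jl_convex_body (R : realType) (d : nat) (K : set 'rV[R]_d) : Prop :=
  compact K /\ jl_convex_set K /\ (interior K !=set0).

Definition jl_box (R : realType) (d : nat) (a b : 'rV[R]_d) : set 'rV[R]_d :=
  [set x | forall i, a 0 i <= x 0 i <= b 0 i].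

Definition jl_lebesgue_vol (R : realType) (d : nat) (A : set 'rV[R]_d) : \bar R :=
  ereal_inf [set s : \bar R | exists a b : nat -> 'rV[R]_d,
     [/\ (forall k i, a k 0 i <= b k 0 i),
         A `<=` \bigcup_k jl_box (a k) (b k) &
         s = (\sum_(0 <= k <oo) (\prod_(i < d) (b k 0 i - a k 0 i))%:E)%E]].

Definition jl_hplus (R : realType) (d : nat) (c u : 'rV[R]_d) : set 'rV[R]_d :=
  [set x | 0 <= jl_dotv (x - c) u].
Definition jl_hminus (R : realType) (d : nat) (c u : 'rV[R]_d) : set 'rV[R]_d :=
  [set x | jl_dotv (x - c) u <= 0].

(* Main.v *)
Require Import Defs.
From HB Require Import structures.
From mathcomp Require Import all_boot all_order all_algebra.
From mathcomp Require Import all_classical all_reals all_analysis.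
From mathcomp Require Import ring lra.
Import Order.TTheory GRing.Theory Num.Theory.
Import numFieldNormedType.Exports.
Local Open Scope classical_set_scope.
Local Open Scope ring_scope.

Lemma jl_vol_ge0 (R : realType) (d : nat) (X : set 'rV[R]_d) :
  (0 <= jl_lebesgue_vol X)%E.
Proof.
apply: le_ereal_inf_tmp => s [a [b [hab _ ->]]].
apply: nneseries_ge0 => k _ _; rewrite lee_fin; apply: prodr_ge0 => i _.
by rewrite subr_ge0 hab.
Qed.

Lemma jl_vol_mono (R : realType) (d : nat) (X Y : set 'rV[R]_d) :
  X `<=` Y -> (jl_lebesgue_vol X <= jl_lebesgue_vol Y)%E.
Proof.
move=> XY; apply: ereal_inf_le_tmp => s [a [b [hab hY ->]]].
by exists a, b; split => //; apply: subset_trans XY hY.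
Qed.

Lemma jl_vol_affine (R : realType) (d : nat) (t : R) (w : 'rV[R]_d)
  (X Y : set 'rV[R]_d) : 0 < t -> X `<=` [set w - t *: y | y in Y] ->
  (jl_lebesgue_vol X <= (t ^+ d)%:E * jl_lebesgue_vol Y)%E.
Proof.
move=> t0 hX.
have key : forall s, (exists a b : nat -> 'rV[R]_d,
     [/\ (forall k i, a k 0 i <= b k 0 i),
         Y `<=` \bigcup_k jl_box (a k) (b k) &
         s = (\sum_(0 <= k <oo) (\prod_(i < d) (b k 0 i - a k 0 i))%:E)%E]) ->
    (jl_lebesgue_vol X <= (t ^+ d)%:E * s)%E.
  move=> s [a [b [hab hY ->]]].
  rewrite -nneseriesZl; last first.
    by move=> k _; rewrite lee_fin; apply: prodr_ge0 => i _; rewrite subr_ge0 hab.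
  apply: ereal_inf_lbound.
  exists (fun k => w - t *: b k), (fun k => w - t *: a k); split.
  - by move=> k i; rewrite !mxE lerD2l lerN2 ler_pM2l.
  - move=> x /hX [y /hY [k _ hk] <-]; exists k => // i.
    have /andP[h1 h2] := hk i.
    by rewrite !mxE lerD2l lerN2 ler_pM2l // lerD2l lerN2 ler_pM2l // h1 h2.
  - apply: eq_eseriesr => k _; rewrite -EFinM; congr EFin; symmetry.
    rewrite (eq_bigr (fun i => t * (b k 0 i - a k 0 i))) => [|i _].
      by rewrite big_split /= prodr_const card_ord.
    by rewrite !mxE; ring.
have td : 0 < t ^+ d by rewrite exprn_gt0.
have h : ((t ^+ d)^-1%:E * jl_lebesgue_vol X <= jl_lebesgue_vol Y)%E.
  apply: le_ereal_inf_tmp => s hs.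
  apply: le_trans (lee_wpmul2l _ (key s hs)) _.
    by rewrite lee_fin invr_ge0 ltW.
  by rewrite muleA -EFinM mulVf ?gt_eqF // mul1e.
apply: le_trans (lee_wpmul2l _ h); last by rewrite lee_fin ltW.
by rewrite muleA -EFinM mulfV ?gt_eqF // mul1e.
Qed.

Lemma jl_dotZl (R : realType) (d : nat) (a : R) (x y : 'rV[R]_d) :
  jl_dotv (a *: x) y = a * jl_dotv x y.
Proof. by rewrite /jl_dotv mulr_sumr; apply: eq_bigr => i _; rewrite mxE mulrA. Qed.

Lemma jl_dotZr (R : realType) (d : nat) (a : R) (x y : 'rV[R]_d) :
  jl_dotv x (a *: y) = a * jl_dotv x y.
Proof. by rewrite /jl_dotv mulr_sumr; apply: eq_bigr => i _; rewrite mxE; ring. Qed.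

Theorem lemma4p1 (R : realType) (d : nat) (K : set 'rV[R]_d) (r : R)
  (A : 'M[R]_d) (q c u : 'rV[R]_d) :
  jl_convex_body K -> 0 <= r ->
  (* E = A^{-1}(q + B) is a John ellipsoid of K, with center c = A^{-1} q *)
  A \in unitmx ->
  jl_stransl q (@jl_unit_ball R d) `<=` [set x *m A | x in K] ->
  [set x *m A | x in K] `<=` jl_stransl q (jl_sdil d%:R (@jl_unit_ball R d)) ->
  c *m A = q ->
  (* H = {x | <x - c, u> = 0} is a hyperplane through c *)
  u != 0 ->
  (jl_lebesgue_vol (jl_msum (K `&` jl_hplus c u)
                             (jl_sdil r (@jl_unit_ball R d))) <=
   (1 - (10 * d%:R ^+ d)^-1)%:E *
   adde (jl_lebesgue_vol (jl_msum (K `&` jl_hplus c u)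
                                  (jl_sdil r (@jl_unit_ball R d))))
        (jl_lebesgue_vol (jl_msum (K `&` jl_hminus c u)
                                  (jl_sdil r (@jl_unit_ball R d)))))%E.
Proof.
move=> _ r0 hA hin hout hc u0.
have d0 : (0 < d)%N.
  move: u0; apply: contraNT; rewrite -leqNgt leqn0 => /eqP d0.
  apply/eqP/matrixP => i j; by move: (ltn_ord j); rewrite [X in (_ < X)%N]d0.
set t : R := d%:R.
have t1 : 1 <= t by rewrite /t ler1n.
have t0 : 0 < t by apply: lt_le_trans t1.
have tn0 : t != 0 by rewrite gt_eqF.
set X := jl_msum _ _; set Y := jl_msum (K `&` jl_hminus c u) _.
have XY : X `<=` [set ((1 + t) *: c) - t *: y | y in Y].
  move=> z [x [Kx Hx] [rb [b Bb <-] ->]].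
  have [v [b0 Bb0 <-] hv] : jl_stransl q (jl_sdil t (@jl_unit_ball R d)) (x *m A).
    by apply: hout; exists x.
  have [k Kk hk] : [set x *m A | x in K] (q - b0).
    apply: hin; exists (- b0) => //.
    by rewrite /jl_unit_ball /= -scaleN1r jl_dotZl jl_dotZr mulrA mulN1r opprK mul1r.
  set y' := c - t^-1 *: (x - c).
  have ky : k = y'.
    apply: (can_inj (mulmxK hA)); rewrite hk /y' mulmxBl -scalemxAl mulmxBl hc -hv.
    by apply/matrixP => i j; rewrite !mxE; field.
  exists (y' + r *: (- t^-1 *: b)).
    exists y'; first split.
    - by rewrite -ky.
    - rewrite /jl_hminus /= /y' addrAC subrr add0r -scaleNr jl_dotZl.
      by rewrite mulNr oppr_le0 mulr_ge0 // invr_ge0 ltW.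
    exists (r *: (- t^-1 *: b)) => //; exists (- t^-1 *: b) => //.
    rewrite /jl_unit_ball /= jl_dotZl jl_dotZr mulrA.
    have Bb' : jl_dotv b b <= 1 := Bb.
    have Bb0' : 0 <= jl_dotv b b.
      by apply: sumr_ge0 => i _; rewrite -expr2 sqr_ge0.
    have w1 : t^-1 <= 1 by rewrite invf_le1.
    have w0 : 0 <= t^-1 by rewrite invr_ge0 ltW.
    nra.
  by apply/matrixP => i j; rewrite !mxE; field.
have PM := jl_vol_affine R d t ((1 + t) *: c) X Y t0 XY.
have D1 : 1 <= t ^+ d by rewrite exprn_ege1.
set e := (10 * t ^+ d)^-1.
have he : e * (10 * t ^+ d) = 1 by rewrite mulVf // gt_eqF // mulr_gt0 // exprn_gt0.
have e0 : 0 <= e by rewrite invr_ge0 mulr_ge0 // exprn_ge0 // ltW.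
have e1 : 0 < 1 - e by nra.
move: (@jl_vol_ge0 R d X) (@jl_vol_ge0 R d Y) PM.
case: (jl_lebesgue_vol X) => [p| |]; case: (jl_lebesgue_vol Y) => [m| |] //.
- rewrite !lee_fin => p0 m0 hpm.
  have h1 : e * p <= e * (t ^+ d * m) by rewrite ler_wpM2l.
  nra.
- by move=> _ _ _; rewrite (_ : adde _ _ = +oo%E) // gt0_muley ?leey // lte_fin.
- by [] || (move=> _ _; rewrite leye_eq).

- by move=> *; rewrite (_ : adde _ _ = +oo%E) // gt0_muley ?leey // lte_fin.
Qed.
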